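(* Let $n\geq 1$ and let $\Gamma'$ be a connected 3-regular graph with $n-1$ legs. Let $\Gamma_1,\Gamma_2$ be two graphs each obtained from $\Gamma'$ by adding a new vertex in the interior of some edge or leg of $\Gamma'$ and attaching a new leg to that vertex. Then $\Gamma_1$ and $\Gamma_2$ (which are 3-regular graphs with $n$ legs and the same first Betti number as $\Gamma'$) are linked.
   Context: A graph with $n$ legs consists of a finite nonempty vertex set, a finite set of half-edges, an involution on half-edges with exactly $n$ fixed points (legs), and an endpoint map from half-edges to vertices; edges are the 2-element orbits. Graphs are connected. Valency of $v$ = number of half-edges (including legs) at $v$; 3-regular means all valencies are 3. $b_1=|E|-|V|+1$. $\Gamma/e$ denotes contraction of an edge $e$. Strongly linked: non-loop edges $e_i\in E(\Gamma_i)$ and an isomorphism $\Gamma_1/e_1\cong\Gamma_2/e_2$ carrying the image vertex of $e_1$ to that of $e_2$; linked: joined by a finite chain of consecutively strongly linked graphs. *)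

(* Defs.v *)
From Stdlib Require Import Relations.
From HB Require Import structures.
From mathcomp Require Import all_boot.
Unset Printing Implicit Defensive.

(* The vertex set and the half-edge set are finite
   subsets [verts], [hes] of ambient finite types; [ginv] is the involution
   on half-edges and [gep] the endpoint map (only their values on [hes]
   matter). *)
Record graph := Graph {
  gV : finType;
  gH : finType;
  verts : {set gV};
  hes : {set gH};
  ginv : gH -> gH;
  gep : gH -> gV
}.
Arguments verts : clear implicits.
Arguments hes : clear implicits.
Arguments ginv : clear implicits.
Arguments gep : clear implicits.

Definition wf (G : graph) : Prop :=
  verts G != set0 /\
  (forall x, x \in hes G -> ginv G x \in hes G) /\
  (forall x, x \in hes G -> ginv G (ginv G x) = x) /\
  (forall x, x \in hes G -> gep G x \in verts G).

Definition legs (G : graph) : {set gH G} := [set x in hes G | ginv G x == x].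

Definition valency (G : graph) (v : gV G) : nat := #|[set x in hes G | gep G x == v]|.

Definition three_regular (G : graph) : Prop :=
  forall v, v \in verts G -> valency G v = 3.

Definition adj (G : graph) : rel (gV G) := fun u v =>
  [exists x in hes G, [&& ginv G x != x, gep G x == u & gep G (ginv G x) == v]].

Definition connected (G : graph) : Prop :=
  forall u v, u \in verts G -> v \in verts G -> connect (adj G) u v.

Definition is_graph (G : graph) : Prop := wf G /\ connected G.

Definition nonloop (G : graph) (h : gH G) : Prop :=
  h \in hes G /\ ginv G h != h /\ gep G h != gep G (ginv G h).

(* contraction of the edge {h, ginv h}: the endpoint of (ginv h) is merged
   into the endpoint of h (the image vertex of the edge is gep G h) *)
Definition contract (G : graph) (h : gH G) : graph :=
  let a := gep G h in let b := gep G (ginv G h) in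
  @Graph (gV G) (gH G) (verts G :\ b) (hes G :\ h :\ ginv G h) (ginv G)
    (fun x => if gep G x == b then a else gep G x).

Definition iso_at (G1 G2 : graph) (v1 : gV G1) (v2 : gV G2) : Prop :=
  exists (fV : gV G1 -> gV G2) (fH : gH G1 -> gH G2),
    {in verts G1 &, injective fV} /\ fV @: verts G1 = verts G2 /\
    {in hes G1 &, injective fH} /\ fH @: hes G1 = hes G2 /\
    (forall x, x \in hes G1 -> fH (ginv G1 x) = ginv G2 (fH x)) /\
    (forall x, x \in hes G1 -> fV (gep G1 x) = gep G2 (fH x)) /\
    fV v1 = v2.

Definition strongly_linked (G1 G2 : graph) : Prop :=
  is_graph G1 /\ is_graph G2 /\
  exists (h1 : gH G1) (h2 : gH G2), nonloop G1 h1 /\ nonloop G2 h2 /\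
    iso_at (contract G1 h1) (contract G2 h2) (gep G1 h1) (gep G2 h2).

Definition linked : graph -> graph -> Prop := clos_refl_trans graph strongly_linked.

(* Insert a new vertex (None) in the interior of the edge {h, ginv h}
   (or of the leg h if ginv h = h) and attach a new leg (inr 2) to it.
   New half-edges: inr 0 (paired with inl h), inr 1 (paired with
   inl (ginv h) if h is not a leg, otherwise inr 1 is the new outer leg),
   inr 2 (the new leg). *)
Definition sd_inv (G : graph) (h : gH G) (y : gH G + 'I_3) : gH G + 'I_3 :=
  let hl := ginv G h == h in
  match y with
  | inl x =>
      if x == h then inr (@Ordinal 3 0 isT)
      else if (x == ginv G h) && ~~ hl then inr (@Ordinal 3 1 isT)
      else inl (ginv G x)
  | inr i =>
      if val i == 0 then inl h
      else if (val i == 1) && ~~ hl then inl (ginv G h)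
      else inr i
  end.

Definition sd_ep (G : graph) (y : gH G + 'I_3) : option (gV G) :=
  match y with inl x => Some (gep G x) | inr _ => None end.

Definition subdivide (G : graph) (h : gH G) : graph :=
  @Graph (option (gV G)) (gH G + 'I_3)%type
    (None |: [set Some v | v in verts G])
    ([set inl x | x in hes G] :|: [set inr i | i : 'I_3])
    (@sd_inv G h) (@sd_ep G).

(* Main.v *)
Require Import Defs.
From HB Require Import structures.
From mathcomp Require Import all_boot.
From Stdlib Require Import Relations.

Section S.
Variables (G : graph) (h : gH G).
Hypothesis wfG : wf G.
Hypothesis hh : h \in hes G.

Let S := subdivide G h.

Lemma sd_hes_l x : (inl x \in hes S) = (x \in hes G).
Proof.
rewrite /S /= in_setU mem_imset; last by move=> a b [].
case: (x \in hes G) => //=; apply/imsetP => -[i _] //.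
Qed.

Lemma sd_hes_r i : inr i \in hes S.
Proof. by rewrite /S /= in_setU mem_imset ?orbT // => a b []. Qed.

Lemma sd_verts_S v : (Some v \in verts S) = (v \in verts G).
Proof. rewrite /S /= in_setU1 /= mem_imset //; by move=> a b []. Qed.

Lemma sd_verts_N : None \in verts S.
Proof. by rewrite /S /= in_setU1 eqxx. Qed.

Lemma hesS_cases y : y \in hes S -> (exists2 x, y = inl x & x \in hes G) \/ exists i, y = inr i.
Proof. case: y => [x|i]; [rewrite sd_hes_l; left; by exists x | right; by exists i]. Qed.

End S.


Section S.
Variables (G : graph) (h : gH G).
Hypothesis wfG : wf G.
Hypothesis hh : h \in hes G.

Lemma sd_inv_inv y : y \in hes (subdivide G h) -> sd_inv G h (sd_inv G h y) = y.
Proof.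
case: wfG => _ [cl [inv _]].
case: y => [x|i].
  rewrite sd_hes_l => hx.
  rewrite /sd_inv.
  case: (eqVneq x h) => [->|xh] /=; first by [].
  case: (eqVneq x (ginv G h)) => [xe|xne] /=.
    case: (eqVneq (ginv G h) h) => [lh|nl] /=.
      by move: xh; rewrite xe lh eqxx.
    by rewrite -xe.
  have g1 : ginv G x != h.
    apply/eqP => e; move: xne; by rewrite -e inv ?eqxx.
  rewrite (negbTE g1) /=.
  have g2 : ginv G x != ginv G h.
    apply/eqP => e; move: xh; by rewrite -(inv x hx) e inv ?eqxx.
  by rewrite (negbTE g2) /= inv.
case: i => -[|[|[|k]]] Hi //= _.
- by rewrite eqxx; rewrite ?eqxx /=; f_equal; exact: ord_inj.
- case: (eqVneq (ginv G h) h) => [lh|nl] /=.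
    by rewrite lh; rewrite ?eqxx /=; f_equal; exact: ord_inj.
  by rewrite (negbTE nl) eqxx /=; rewrite ?eqxx /=; f_equal; exact: ord_inj.
Qed.


Lemma sd_inv_cl y : y \in hes (subdivide G h) -> sd_inv G h y \in hes (subdivide G h).
Proof.
case: wfG => _ [cl [inv _]].
case: y => [x|i]; last first.
  move=> _; rewrite /sd_inv; case: ifP => _; first by rewrite sd_hes_l.
  case: ifP => _; [rewrite sd_hes_l; exact: cl | exact: sd_hes_r].
rewrite sd_hes_l => hx; rewrite /sd_inv.
case: ifP => _; first exact: sd_hes_r.
case: ifP => _; first exact: sd_hes_r.
rewrite sd_hes_l; exact: cl.
Qed.

Lemma sd_adj_edge x : x \in hes G -> ginv G x != x ->
  connect (adj (subdivide G h)) (Some (gep G x)) (Some (gep G (ginv G x))).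
Proof.
case: wfG => _ [cl [inv _]] hx nx.
case: (eqVneq x h) => [xh|xh].
  subst x.
  apply: (@connect_trans _ _ None); apply: connect1; apply/existsP.
    exists (inl h); rewrite sd_hes_l hh /= eqxx /=. by rewrite !eqxx.
  exists (inr (@Ordinal 3 1 isT)); by rewrite (sd_hes_r G h) /= nx /= eqxx.
case: (eqVneq x (ginv G h)) => [xe|xne].
  have nl : ginv G h != h by apply: contra_neq xh => e; rewrite xe e.
  apply: (@connect_trans _ _ None); apply: connect1; apply/existsP.
    exists (inl x); rewrite sd_hes_l hx /= (negbTE xh) xe eqxx nl /=. by rewrite !eqxx.
  exists (inr (@Ordinal 3 0 isT)); rewrite (sd_hes_r G h) /= xe inv //.
apply: connect1; apply/existsP.
exists (inl x); rewrite sd_hes_l hx /= (negbTE xh) (negbTE xne) /=.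
by rewrite (inj_eq (@inl_inj _ _)) nx /= !eqxx.
Qed.


Lemma sd_lift u w : connect (adj G) u w -> connect (adj (subdivide G h)) (Some u) (Some w).
Proof.
move/connectP => [p]; elim: p u => [|b p IH] u /=; first by move=> _ ->.
move=> /andP [/existsP [x /and3P [hx nx /andP [/eqP eu /eqP eb]]] pp] ew.
apply: (@connect_trans _ _ (Some b)); last exact: IH.
rewrite -eu -eb; exact: sd_adj_edge.
Qed.

Lemma sd_is_graph : is_graph G -> is_graph (subdivide G h).
Proof.
move=> [wf' con]; have wfG' := wfG.
case: wfG' => _ [cl [inv ep]].
split.
  split; first by apply/set0Pn; exists None; exact: sd_verts_N.
  split; first exact: sd_inv_cl.
  split; first exact: sd_inv_inv.
  move=> y; case/hesS_cases => [[x -> hx]|[i ->]].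
    by rewrite (sd_verts_S G h) ep.
  exact: sd_verts_N.
have ha : gep G h \in verts G by exact: ep.
have e1 : adj (subdivide G h) (Some (gep G h)) None.
  apply/existsP; exists (inl h); by rewrite sd_hes_l hh /= eqxx /= !eqxx.
have e2 : adj (subdivide G h) None (Some (gep G h)).
  apply/existsP; exists (inr (@Ordinal 3 0 isT)); by rewrite (sd_hes_r G h) /= !eqxx.
have toA : forall s, s \in verts (subdivide G h) -> connect (adj (subdivide G h)) s (Some (gep G h)).
  case=> [u|] hs; last exact: connect1.
  apply: sd_lift; apply: con => //; by rewrite -(sd_verts_S G h).
have fromA : forall s, s \in verts (subdivide G h) -> connect (adj (subdivide G h)) (Some (gep G h)) s.
  case=> [u|] hs; last exact: connect1.
  apply: sd_lift; apply: con => //; by rewrite -(sd_verts_S G h).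
move=> s t hs ht; apply: connect_trans (toA s hs) (fromA t ht).
Qed.

End S.


Lemma imset_can (T U : finType) (f : T -> U) (g : U -> T) (A : {set T}) (B : {set U}) :
  (forall x, x \in A -> f x \in B) -> (forall y, y \in B -> g y \in A /\ f (g y) = y) ->
  f @: A = B.
Proof.
move=> fAB gBA; apply/setP => y; apply/imsetP/idP => [[x xA ->]|yB]; first exact: fAB.
by case: (gBA y yB) => gA fg; exists (g y).
Qed.

Definition o0 : 'I_3 := @Ordinal 3 0 isT.
Definition o1 : 'I_3 := @Ordinal 3 1 isT.

Lemma sd_contr_hes (G : graph) (h : gH G) y :
  y \in hes (contract (subdivide G h) (inl h)) =
  [&& y != inr o0, y != inl h & y \in hes (subdivide G h)].
Proof. by rewrite /contract !in_setD1 /= eqxx. Qed.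

Lemma sd_contr_verts (G : graph) (h : gH G) :
  verts (contract (subdivide G h) (inl h)) = verts (subdivide G h) :\ None.
Proof. by rewrite /contract /= eqxx. Qed.

Lemma sd_nonloop (G : graph) (h : gH G) : h \in hes G -> nonloop (subdivide G h) (inl h).
Proof. move=> hh; split; first by rewrite sd_hes_l. by rewrite /= eqxx. Qed.


Lemma sumE1 (T U : eqType) (a b : T) : (@inl T U a == inl b) = (a == b). Proof. by []. Qed.
Lemma sumE2 (T U : eqType) (a : T) (b : U) : (inl a == inr b) = false. Proof. by []. Qed.
Lemma sumE3 (T U : eqType) (a : U) (b : T) : (inr a == inl b) = false. Proof. by []. Qed.
Lemma sumE4 (T U : eqType) (a b : U) : (@inr T U a == inr b) = (a == b). Proof. by []. Qed.
Lemma ordE n a b p q : (@Ordinal n a p == @Ordinal n b q) = (a == b). Proof. by []. Qed.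

Lemma memL (T : finType) (A : {set T}) (z : T) :
  (inl z \in [set inl x | x in A] :|: [set inr i | i : 'I_3]) = (z \in A).
Proof. rewrite in_setU mem_imset; last by move=> a b []. case: (z \in A) => //=; by apply/imsetP => -[]. Qed.
Lemma memR (T : finType) (A : {set T}) (j : 'I_3) :
  (inr j \in [set @inl T 'I_3 x | x in A] :|: [set inr i | i : 'I_3]) = true.
Proof. by rewrite in_setU mem_imset ?orbT // => a b []. Qed.

Ltac memb cl := solve [ repeat (apply: cl); assumption ].

Ltac invs inv cl :=
  repeat match goal with
  | |- context [?g (?g ?t)] => rewrite (inv t); last memb cl
  | H : context [?g (?g ?t)] |- _ => rewrite (inv t) in H; last memb cl
  end.

Ltac proc_eq inv cl E :=
  first [ match type of E with ?a = ?b => is_var b; subst b end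
        | match type of E with ?a = ?b => is_var a; subst a end
        | match type of E with
          | ?g ?p = ?g ?q => let E' := fresh "E" in have E' := f_equal g E;
               rewrite (inv p) in E'; [|memb cl]; rewrite (inv q) in E'; [|memb cl]; clear E; subst
          end
        | idtac ].

Ltac atom inv cl c :=
  match c with
  | ~~ ?d => atom inv cl d
  | ?a == ?b =>
    lazymatch a with context [if _ then _ else _] => fail | _ => idtac end;
    lazymatch b with context [if _ then _ else _] => fail | _ => idtac end;
    let E := fresh "E" in case: (eqVneq a b) => E; [proc_eq inv cl E|]
  end.

Ltac splitter inv cl :=
  match goal with
  | |- context [if ?c && _ then _ else _] => atom inv cl c
  | |- context [if ?c then _ else _] => atom inv cl c
  end.

Ltac contra :=
  match goal with
  | H : is_true (?a != ?a) |- _ => by rewrite eqxx in H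
  | H : is_true (?a != ?b), E : ?a = ?b |- _ => by rewrite E eqxx in H
  | H : is_true (?a != ?b), E : ?b = ?a |- _ => by rewrite E eqxx in H
  end.

Ltac useneq :=
  match goal with
  | H : ?a = ?b |- context [?a == ?b] => rewrite (introT eqP H)
  | H : ?a = ?b |- context [?b == ?a] => rewrite [b == a]eq_sym (introT eqP H)
  | H : is_true (?a != ?b) |- context [?a == ?b] => rewrite (negbTE H)
  | H : is_true (?a != ?b) |- context [?b == ?a] => rewrite [b == a]eq_sym (negbTE H)
  end.

Ltac grind inv cl :=
  repeat (first [ useneq | progress simpl | progress (rewrite ?sumE1 ?sumE2 ?sumE3 ?sumE4 ?ordE ?eqxx ?memL ?memR /=) | memb cl
                | progress (invs inv cl) | contra | done |
   match goal with H : _ = _ |- _ => solve [rewrite H; done | rewrite -H; done] end | splitter inv cl ]).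


Lemma linkA (G : graph) (h1 h2 : gH G) : is_graph G ->
  h1 \in hes G -> h2 \in hes G -> h1 != h2 -> gep G h1 = gep G h2 ->
  strongly_linked (subdivide G h1) (subdivide G h2).
Proof.
move=> isG hh1 hh2 n12 ev.
have wfG := isG.1.
have [_ [cl [inv _]]] := wfG.
split; first exact: sd_is_graph.
split; first exact: sd_is_graph.
exists (inl h1), (inl h2).
split; first exact: sd_nonloop.
split; first exact: sd_nonloop.
pose fA (y : gH G + 'I_3) : gH G + 'I_3 :=
  if y == inl h2 then inr o1 else if y == inr o1 then inl h1 else y.
pose gA (y : gH G + 'I_3) : gH G + 'I_3 :=
  if y == inr o1 then inl h2 else if y == inl h1 then inr o1 else y.
exists (fun v => v), fA.
split; first by move=> a b.
split; first by rewrite !sd_contr_verts imset_id.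
have fg : {in hes (contract (subdivide G h1) (inl h1)), cancel fA gA}.
{ move=> y; rewrite sd_contr_hes /fA /gA /o0 /o1.
  case: y => [x|[[|[|[|k]]] Hi]]; rewrite ?sd_hes_l //=;
    try (have ->: Hi = isT by exact: bool_irrelevance).
    rewrite sumE1 => /andP [nx hx]; grind inv cl.
  all: move=> _; grind inv cl. }
split; first exact: can_in_inj fg.
split.
{ apply: (@imset_can _ _ fA gA).
  { move=> y; rewrite !sd_contr_hes /fA /o0 /o1.
    case: y => [x|[[|[|[|k]]] Hi]]; rewrite ?sd_hes_l //=;
      try (have ->: Hi = isT by exact: bool_irrelevance).
      rewrite sumE1 => /andP [nx hx]; grind inv cl.
    all: move=> _; grind inv cl. }
  { move=> y; rewrite !sd_contr_hes /fA /gA /o0 /o1.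
  case: y => [x|[[|[|[|k]]] Hi]]; rewrite ?sd_hes_l //=;
    try (have ->: Hi = isT by exact: bool_irrelevance).
    rewrite sumE1 => /andP [nx hx]; grind inv cl.
  all: move=> _; grind inv cl. } }
split.
{ move=> y; rewrite sd_contr_hes /fA /o0 /o1.
  case: y => [x|[[|[|[|k]]] Hi]]; rewrite ?sd_hes_l //=;
    try (have ->: Hi = isT by exact: bool_irrelevance).
    rewrite sumE1 => /andP [nx hx]; grind inv cl.
  all: move=> _; grind inv cl. }
split.
{ move=> y; rewrite sd_contr_hes /fA /o0 /o1.
  case: y => [x|[[|[|[|k]]] Hi]]; rewrite ?sd_hes_l //=;
    try (have ->: Hi = isT by exact: bool_irrelevance).
    rewrite sumE1 => /andP [nx hx]; grind inv cl.
  all: move=> _; grind inv cl. }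
by rewrite /= ev.
Qed.

Lemma linkB (G : graph) (h : gH G) : is_graph G ->
  h \in hes G -> ginv G h != h ->
  strongly_linked (subdivide G h) (subdivide G (ginv G h)).
Proof.
move=> isG hh nl.
have wfG := isG.1.
have [_ [cl [inv _]]] := wfG.
have hh' := cl h hh.
split; first exact: sd_is_graph.
split; first exact: sd_is_graph.
exists (inl (ginv G h)), (inl (ginv G h)).
split.
  split; first by rewrite sd_hes_l.
  rewrite /=; grind inv cl.
split; first exact: sd_nonloop.
pose fA (y : gH G + 'I_3) : gH G + 'I_3 := if y == inr o0 then inr o1 else y.
pose gA (y : gH G + 'I_3) : gH G + 'I_3 := if y == inr o1 then inr o0 else y.
exists (fun v => v), fA.
split; first by move=> a b.
split.
{ rewrite imset_id /contract /=; congr (_ :\ _); grind inv cl. }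
have fg : {in hes (contract (subdivide G h) (inl (ginv G h))), cancel fA gA}.
{ move=> y; rewrite /contract !in_setD1 /fA /gA /o0 /o1.
  case: y => [x|[[|[|[|k]]] Hi]]; rewrite /=;
    try (have ->: Hi = isT by exact: bool_irrelevance).
  all: grind inv cl. }
split; first exact: can_in_inj fg.
split.
{ apply: (@imset_can _ _ fA gA).
  { move=> y; rewrite /contract !in_setD1 /fA /o0 /o1.
    case: y => [x|[[|[|[|k]]] Hi]]; rewrite /=;
      try (have ->: Hi = isT by exact: bool_irrelevance).
    all: grind inv cl. }
  { move=> y; rewrite /contract !in_setD1 /fA /gA /o0 /o1.
    case: y => [x|[[|[|[|k]]] Hi]]; rewrite /=;
      try (have ->: Hi = isT by exact: bool_irrelevance).
    all: grind inv cl. } }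
split.
{ move=> y; rewrite /contract !in_setD1 /fA /o0 /o1.
  case: y => [x|[[|[|[|k]]] Hi]]; rewrite /=;
    try (have ->: Hi = isT by exact: bool_irrelevance).
  all: grind inv cl. }
split.
{ move=> y; rewrite /contract !in_setD1 /fA /o0 /o1.
  case: y => [x|[[|[|[|k]]] Hi]]; rewrite /=;
    try (have ->: Hi = isT by exact: bool_irrelevance).
  all: grind inv cl. }
by [].
Qed.


Theorem mainTheorem11 (n : nat) (G' : graph) (h1 h2 : gH G') :
  1 <= n ->
  is_graph G' -> three_regular G' -> #|legs G'| = n - 1 ->
  h1 \in hes G' -> h2 \in hes G' ->
  linked (subdivide G' h1) (subdivide G' h2).
Proof.
move=> _ isG _ _ hh1 hh2.
have [[_ [cl [inv ep]]] con] := isG.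
have sA : forall a b, a \in hes G' -> b \in hes G' -> gep G' a = gep G' b ->
    linked (subdivide G' a) (subdivide G' b).
  move=> a b ha hb e; case: (eqVneq a b) => [<-|nab]; first exact: rt_refl.
  by apply: rt_step; apply: linkA.
have sB : forall x, x \in hes G' -> linked (subdivide G' x) (subdivide G' (ginv G' x)).
  move=> x hx; case: (eqVneq (ginv G' x) x) => [->|nx]; first exact: rt_refl.
  by apply: rt_step; apply: linkB.
have := con _ _ (ep _ hh1) (ep _ hh2) => /connectP [p pp el].
suff: forall u, (exists2 a, a \in hes G' & gep G' a = u /\ linked (subdivide G' h1) (subdivide G' a)) ->
   path (adj G') u p -> forall b, b \in hes G' -> gep G' b = last u p ->
   linked (subdivide G' h1) (subdivide G' b).
  move=> H; apply: (H (gep G' h1)) => //; exists h1 => //; split => //; exact: rt_refl.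
elim: p {pp el} => [|w p IH] u [a ha [ea la]] /=.
  move=> _ b hb eb; apply: rt_trans la _; apply: sA => //; by rewrite ea.
move=> /andP [/existsP [x /and3P [hx nx /andP [/eqP eu /eqP ew]]] pp] b hb eb.
apply: (IH w) => //; exists (ginv G' x); first exact: cl.
split => //.
apply: rt_trans la _; apply: rt_trans (sB x hx).
apply: sA => //; by rewrite ea eu.
Qed.
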